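(* Let $\mathcal{C}$ be a Conway category and let $\mathbf{Q}$ be a finite automaton such that the identity $\Gamma(\mathbf{Q})$ holds in $\mathcal{C}$. Then for every extension $\mathbf{Q}'$ of $\mathbf{Q}$, the identity $\Gamma(\mathbf{Q}')$ holds in $\mathcal{C}$.
   Context: Cartesian categories have chosen finite products (terminal object $T$, projections $\pi_i$, tupling $\langle\cdot\rangle$, $!_A:A\to T$, $f\times g$), strictly associative; composition is written $g\circ f$; $\Delta_{A^n}=\langle 1_A,\ldots,1_A\rangle:A\to A^n$. A dagger operation maps $f:A\times C\to A$ to $f^\dagger:C\to A$. A Conway category is a cartesian category with dagger satisfying: $(f\circ(1_A\times g))^\dagger=f^\dagger\circ g$ ($f:A\times B\to A$, $g:C\to B$); $f^{\dagger\dagger}=(f\circ(\Delta_{A^2}\times 1_C))^\dagger$ ($f:A\times A\times C\to A$); $(f\circ\langle g,\pi_2^{A\times C}\rangle)^\dagger=f\circ\langle (g\circ\langle f,\pi_2^{B\times C}\rangle)^\dagger,1_C\rangle$ ($f:B\times C\to A$, $g:A\times C\to B$). A finite automaton $\mathbf{Q}=(Q,Z,\cdot)$ has finite nonempty state set $Q$, finite nonempty input alphabet $Z$ and action $Q\times Z\to Q$, extended to words; $u^{\mathbf{Q}}:Q\to Q$ denotes $q\mapsto qu$. An automaton $\mathbf{Q}'=(Q,Z',\cdot)$ with the same state set is an extension of $\mathbf{Q}$ if $Z\subseteq Z'$, $a^{\mathbf{Q}'}=a^{\mathbf{Q}}$ for all $a\in Z$, and for each $b\in Z'\setminus Z$ there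 is a word $u\in Z^*$ with $b^{\mathbf{Q}'}=u^{\mathbf{Q}}$. Write $Q=\{q_1,\ldots,q_n\}$, identified with $\{1,\ldots,n\}$, and $Z=\{a_1,\ldots,a_m\}$. For an object $A$ and $i\in[n]$ let $\rho_i^{\mathbf{Q},A}=\langle\pi^{A^n}_{ia_1},\ldots,\pi^{A^n}_{ia_m}\rangle:A^n\to A^m$ ($ia_j$ is the index of $q_i\cdot a_j$). For $f:A^m\times C\to A$ let $f^{\mathbf{Q},A}:A^n\times C\to A^n$ have components $\pi_i^{A^n}\circ f^{\mathbf{Q},A}=f\circ(\rho_i^{\mathbf{Q},A}\times 1_C)$. The identity $\Gamma(\mathbf{Q})$ holds in $\mathcal{C}$ if $(f^{\mathbf{Q},A})^\dagger=\Delta_{A^n}\circ(f\circ(\Delta_{A^m}\times 1_C))^\dagger$ for all objects $A,C$ and all $f:A^m\times C\to A$. *)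

(* Defs.v *)
From mathcomp Require Import ssreflect ssrfun ssrbool eqtype ssrnat seq fintype.
Set Implicit Arguments. Unset Strict Implicit. Unset Printing Implicit Defensive.

Record catops := CatOps {
  Ob : Type;
  Hom : Ob -> Ob -> Type;
  comp : forall A B C : Ob, Hom B C -> Hom A B -> Hom A C;  (* comp g f = g o f *)
  idm : forall A : Ob, Hom A A;
  Tm : Ob;
  prod : Ob -> Ob -> Ob;
  pi1 : forall A B : Ob, Hom (prod A B) A;
  pi2 : forall A B : Ob, Hom (prod A B) B;
  pair : forall C A B : Ob, Hom C A -> Hom C B -> Hom C (prod A B);
  bang : forall A : Ob, Hom A Tm;
  dagger : forall A C : Ob, Hom (prod A C) A -> Hom C A
}.

Arguments comp {c A B C} : rename. Arguments idm {c} : rename. Arguments Tm {c} : rename.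
Arguments prod {c} : rename.
Arguments pi1 {c A B} : rename. Arguments pi2 {c A B} : rename. Arguments pair {c C A B} : rename.
Arguments bang {c} : rename. Arguments dagger {c A C} : rename.

Section Ops.
Variable K : catops.

Definition pmor (A B A' B' : Ob K) (f : Hom A A') (g : Hom B B') :
  Hom (prod A B) (prod A' B') := pair (comp f pi1) (comp g pi2).

Definition cartesian : Prop :=
  [/\ ((forall (A B C D : Ob K) (h : Hom C D) (g : Hom B C) (f : Hom A B),
         comp h (comp g f) = comp (comp h g) f) /\
      (forall (A B : Ob K) (f : Hom A B), comp (idm B) f = f)),
      (forall (A B : Ob K) (f : Hom A B), comp f (idm A) = f),
      (forall (C A B : Ob K) (f : Hom C A) (g : Hom C B),
         comp pi1 (pair f g) = f /\ comp pi2 (pair f g) = g),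
      (forall (C A B : Ob K) (h : Hom C (prod A B)), pair (comp pi1 h) (comp pi2 h) = h)
    & (forall (A : Ob K) (f : Hom A Tm), f = bang A)].

Definition conway : Prop :=
  [/\ cartesian,
      (forall (A B C : Ob K) (f : Hom (prod A B) A) (g : Hom C B),
         dagger (comp f (pmor (idm A) g)) = comp (dagger f) g),
      (* double dagger identity; A x A x C is bracketed as A x (A x C) *)
      (forall (A C : Ob K) (f : Hom (prod A (prod A C)) A),
         dagger (dagger f) =
         (* Delta_{A^2} x 1_C = <pi1, <pi1, pi2>> : A x C -> A x (A x C) *)
         dagger (comp f (pair (@pi1 K A C) (pair (@pi1 K A C) (@pi2 K A C)))))
    &
      (forall (A B C : Ob K) (f : Hom (prod B C) A) (g : Hom (prod A C) B),
         dagger (comp f (pair g (@pi2 K A C))) =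
         comp f (pair (dagger (comp g (pair f (@pi2 K B C)))) (idm C)))].

(* A^(k+1), right nested: A^1 = A, A^(k+2) = A x A^(k+1). *)
Fixpoint pow1 (A : Ob K) (k : nat) : Ob K :=
  match k with 0 => A | k'.+1 => prod A (pow1 A k') end.

Unset Implicit Arguments.
Fixpoint proj (A : Ob K) (k : nat) : 'I_k.+1 -> Hom (pow1 A k) A :=
  match k return 'I_k.+1 -> Hom (pow1 A k) A with
  | 0 => fun _ => idm A
  | k'.+1 => fun i => match unlift ord0 i with
                      | None => @pi1 K A (pow1 A k')
                      | Some j => comp (proj A k' j) (@pi2 K A (pow1 A k'))
                      end
  end.

Fixpoint tup (A B : Ob K) (k : nat) : ('I_k.+1 -> Hom B A) -> Hom B (pow1 A k) :=
  match k return ('I_k.+1 -> Hom B A) -> Hom B (pow1 A k) with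
  | 0 => fun fs => fs ord0
  | k'.+1 => fun fs => pair (fs ord0) (tup A B k' (fun j => fs (lift ord0 j)))
  end.

Set Implicit Arguments.
Arguments proj {A k}. Arguments tup {A B k}.
Definition diag (A : Ob K) (k : nat) : Hom A (pow1 A k) := tup (fun _ => idm A).

Section Gamma.
(* A finite automaton with states 'I_n.+1 and letters 'I_m.+1 (i.e. n+1 states,
   m+1 letters, numbered), and action act. *)
Variables (n m : nat) (act : 'I_n.+1 -> 'I_m.+1 -> 'I_n.+1).

Definition rho (A : Ob K) (i : 'I_n.+1) : Hom (pow1 A n) (pow1 A m) :=
  tup (fun j => @proj A n (act i j)).

Definition fQ (A C : Ob K) (f : Hom (prod (pow1 A m) C) A) :
  Hom (prod (pow1 A n) C) (pow1 A n) :=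
  tup (fun i => comp f (pmor (rho A i) (idm C))).

Definition Gamma : Prop :=
  forall (A C : Ob K) (f : Hom (prod (pow1 A m) C) A),
    dagger (fQ f) = comp (diag A n) (dagger (comp f (pmor (diag A m) (idm C)))).
End Gamma.
End Ops.

Definition word_act (n m : nat) (act : 'I_n.+1 -> 'I_m.+1 -> 'I_n.+1)
  (q : 'I_n.+1) (u : seq 'I_m.+1) : 'I_n.+1 := foldl act q u.

(* Q' = (same states, Z', act') is an extension of Q = (states, Z, act), where the
   inclusion Z \subseteq Z' is given by the injection iota. *)
Definition extension (n m m' : nat) (act : 'I_n.+1 -> 'I_m.+1 -> 'I_n.+1)
  (iota : 'I_m.+1 -> 'I_m'.+1) (act' : 'I_n.+1 -> 'I_m'.+1 -> 'I_n.+1) : Prop :=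
  [/\ injective iota,
      (forall (q : 'I_n.+1) (a : 'I_m.+1), act' q (iota a) = act q a)
    & (forall b : 'I_m'.+1, (forall a, iota a != b) ->
         exists u : seq 'I_m.+1, forall q, act' q b = word_act act q u)].

(* Main.v *)
Require Import Defs.
From mathcomp Require Import ssreflect ssrfun ssrbool eqtype ssrnat seq fintype.
From Stdlib Require Import FunctionalExtensionality.
Require Import Defs.
Set Implicit Arguments. Unset Strict Implicit. Unset Printing Implicit Defensive.
Notation prj i := (proj _ _ _ i).
Notation tp fs := (tup _ _ _ _ fs).

Lemma compA (K : catops) (HK : cartesian K) (A B C D : Ob K) (h : Hom C D) (g : Hom B C) (f : Hom A B) :
  comp h (comp g f) = comp (comp h g) f.
Proof. by case: HK => [[H _] _ _ _ _]. Qed.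
Lemma comp1l (K : catops) (HK : cartesian K) (A B : Ob K) (f : Hom A B) : comp (idm B) f = f.
Proof. by case: HK => [[_ H] _ _ _ _]. Qed.
Lemma comp1r (K : catops) (HK : cartesian K) (A B : Ob K) (f : Hom A B) : comp f (idm A) = f.
Proof. by case: HK => [_ H _ _ _]. Qed.
Lemma pi1_pair (K : catops) (HK : cartesian K) (C A B : Ob K) (f : Hom C A) (g : Hom C B) :
  comp pi1 (pair f g) = f.
Proof. by case: HK => [_ _ H _ _]; case: (H _ _ _ f g). Qed.
Lemma pi2_pair (K : catops) (HK : cartesian K) (C A B : Ob K) (f : Hom C A) (g : Hom C B) :
  comp pi2 (pair f g) = g.
Proof. by case: HK => [_ _ H _ _]; case: (H _ _ _ f g). Qed.
Lemma pair_eta (K : catops) (HK : cartesian K) (C A B : Ob K) (h : Hom C (prod A B)) :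
  pair (comp pi1 h) (comp pi2 h) = h.
Proof. by case: HK => [_ _ _ H _]. Qed.
Lemma pair_ext (K : catops) (HK : cartesian K) (C A B : Ob K) (h1 h2 : Hom C (prod A B)) :
  comp pi1 h1 = comp pi1 h2 -> comp pi2 h1 = comp pi2 h2 -> h1 = h2.
Proof. move=> e1 e2; by rewrite -(pair_eta HK h1) -(pair_eta HK h2) e1 e2. Qed.
Lemma pair_comp (K : catops) (HK : cartesian K) (D C A B : Ob K) (f : Hom C A) (g : Hom C B) (h : Hom D C) :
  comp (pair f g) h = pair (comp f h) (comp g h).
Proof.
apply: (pair_ext HK).
- by rewrite (compA HK) !(pi1_pair HK).
- by rewrite (compA HK) !(pi2_pair HK).
Qed.
Lemma pair_pi (K : catops) (HK : cartesian K) (A B : Ob K) : pair (@pi1 K A B) pi2 = idm _.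
Proof. by rewrite -{1}(comp1r HK pi1) -(comp1r HK pi2) (pair_eta HK). Qed.

Lemma unlift0 n : unlift (@ord0 n) ord0 = None.
Proof. by apply: unlift_none. Qed.
Lemma unliftS n (j : 'I_n) : unlift ord0 (lift ord0 j) = Some j.
Proof. by apply: liftK. Qed.

Lemma proj0 (K : catops) (A : Ob K) k : proj K A k.+1 ord0 = pi1.
Proof. by rewrite /= unlift0. Qed.
Lemma projS (K : catops) (A : Ob K) k (j : 'I_k.+1) : proj K A k.+1 (lift ord0 j) = comp (prj j) pi2.
Proof. by rewrite /= unliftS. Qed.

Lemma proj_tup (K : catops) (HK : cartesian K) (A B : Ob K) k (fs : 'I_k.+1 -> Hom B A) i :
  comp (prj i) (tp fs) = fs i.
Proof.
elim: k fs i => [|k IH] fs i.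
  by rewrite /= (comp1l HK); congr fs; apply/val_inj; case: i => [[]].
case: (unliftP ord0 i) => [j ->|->].
  by rewrite projS -(compA HK) /= (pi2_pair HK) IH.
by rewrite proj0 /= (pi1_pair HK).
Qed.

Lemma tup_ext (K : catops) (HK : cartesian K) (A B : Ob K) k (h1 h2 : Hom B (pow1 A k)) :
  (forall i, comp (prj i) h1 = comp (prj i) h2) -> h1 = h2.
Proof.
elim: k h1 h2 => [|k IH] h1 h2 H.
  by move: (H ord0); rewrite /= !(comp1l HK).
apply: (pair_ext HK).
  by move: (H ord0); rewrite proj0.
apply: IH => j; move: (H (lift ord0 j)); by rewrite projS -!(compA HK).
Qed.

Lemma tup_comp (K : catops) (HK : cartesian K) (A B D : Ob K) k (fs : 'I_k.+1 -> Hom B A) (h : Hom D B) :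
  comp (tp fs) h = tp (fun i => comp (fs i) h).
Proof. apply: (tup_ext HK) => i; by rewrite (compA HK) !(proj_tup HK). Qed.

Lemma tup_eq (K : catops) (A B : Ob K) k (fs gs : 'I_k.+1 -> Hom B A) :
  (forall i, fs i = gs i) -> tp fs = tp gs.
Proof. by move=> H; rewrite (functional_extensionality _ _ H). Qed.

Lemma pmor_pair (K : catops) (HK : cartesian K) (D A B A' B' : Ob K) (f : Hom A A') (g : Hom B B') (h : Hom D A) (k : Hom D B) :
  comp (pmor f g) (pair h k) = pair (comp f h) (comp g k).
Proof. by rewrite /pmor (pair_comp HK) -!(compA HK) (pi1_pair HK) (pi2_pair HK). Qed.

Lemma compAr (K : catops) (HK : cartesian K) (A B C D : Ob K) (h : Hom C D) (g : Hom B C) (f : Hom A B) :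
  comp (comp h g) f = comp h (comp g f).
Proof. by rewrite (compA HK). Qed.

Lemma rA (K : catops) (HK : cartesian K) (A B C D : Ob K) (a : Hom C D) (b : Hom B C) (c : Hom B D)
  (e : comp a b = c) (x : Hom A B) : comp a (comp b x) = comp c x.
Proof. by rewrite (compA HK) e. Qed.

Ltac simp HK := rewrite /pmor ?(compAr HK, pair_comp HK, pi1_pair HK, pi2_pair HK, comp1l HK, comp1r HK, proj_tup HK, tup_comp HK).

Lemma cartK (K : catops) (HK : conway K) : cartesian K.
Proof. by case: HK. Qed.

Lemma dparam (K : catops) (HK : conway K) (A B C : Ob K) (f : Hom (prod A B) A) (g : Hom C B) :
  dagger (comp f (pmor (idm A) g)) = comp (dagger f) g.
Proof. by case: HK => [_ H _ _]. Qed.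
Lemma ddag (K : catops) (HK : conway K) (A C : Ob K) (f : Hom (prod A (prod A C)) A) :
  dagger (dagger f) = dagger (comp f (pair pi1 (pair pi1 pi2))).
Proof. by case: HK => [_ _ H _]. Qed.
Lemma dcomp (K : catops) (HK : conway K) (A B C : Ob K) (f : Hom (prod B C) A) (g : Hom (prod A C) B) :
  dagger (comp f (pair g pi2)) = comp f (pair (dagger (comp g (pair f pi2))) (idm C)).
Proof. by case: HK => [_ _ _ H]. Qed.

Lemma dfix (K : catops) (HK : conway K) (A C : Ob K) (f : Hom (prod A C) A) :
  dagger f = comp f (pair (dagger f) (idm C)).
Proof.
have HC := cartK HK.
have := dcomp HK f pi1. by rewrite (pair_pi HC) (comp1r HC) (pi1_pair HC).
Qed.

Lemma dconst (K : catops) (HK : conway K) (A C : Ob K) (k : Hom C A) :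
  dagger (comp k (@pi2 K A C)) = k.
Proof. have HC := cartK HK. by rewrite (dfix HK) (compAr HC) (pi2_pair HC) (comp1r HC). Qed.

Lemma subst_lemma (K : catops) (HK : conway K) (V T L C : Ob K)
  (top : Hom V T) (lay : Hom V L) (mk : Hom (prod T L) V)
  (e1 : comp top mk = pi1) (e2 : comp lay mk = pi2) (e3 : comp mk (pair top lay) = idm V)
  (Phi : Hom (prod V C) V) (S : Hom (prod T C) L)
  (hS : comp lay Phi = comp S (pmor top (idm C))) :
  comp top (dagger Phi) = dagger (comp (comp top Phi) (pair (comp mk (pair pi1 S)) pi2)).
Proof.
have HC := cartK HK.
set H' := comp top Phi.
set Phit := comp H' (pair (comp mk (pair pi1 S)) pi2).
set G : Hom (prod V (prod V C)) L := comp lay pi1.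
set F : Hom (prod L (prod V C)) V := comp mk (pair (comp H' (pair (comp mk (pair (comp top (comp pi1 pi2)) pi1)) (comp pi2 pi2))) (comp S (pair (comp top (comp pi1 pi2)) (comp pi2 pi2)))).
have eP : Phi = comp (comp F (pair G pi2)) (pair pi1 (pair pi1 pi2)).
  rewrite /F /G /H'; simp HC.
  have -> : comp mk (pair (comp top pi1) (comp lay pi1)) = @pi1 _ V C.
    by rewrite -(pair_comp HC) (compA HC) e3 (comp1l HC).
  rewrite (pair_pi HC) (comp1r HC).
  have -> : comp S (pair (comp top pi1) pi2) = comp lay Phi.
    by rewrite hS /pmor (comp1l HC).
  by rewrite -(pair_comp HC) (compA HC) e3 (comp1l HC).
set E := comp mk (pair Phit S).
have e4 : dagger (comp F (pair G pi2)) = comp E (pair (comp top pi1) pi2).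
  rewrite (dcomp HK).
  have -> : comp G (pair F pi2) = comp (comp S (pmor top (idm C))) pi2.
    by rewrite /G /F; simp HC; rewrite (rA HC e2) (pi2_pair HC).
  by rewrite (dconst HK) /F /E /Phit; simp HC.
rewrite eP -(ddag HK) e4 (dcomp HK).
have -> : comp (comp top pi1) (pair E pi2) = Phit.
  by rewrite /E; simp HC; rewrite (rA HC e1) (pi1_pair HC).
rewrite [RHS](dfix HK) /E (compAr HC) (rA HC e1) /Phit /H'; by simp HC.
Qed.

Lemma bin_lemma (K : catops) (HK : conway K) (A B P : Ob K) (g1 : Hom (prod A P) A) (H2 : Hom (prod B P) B) :
  dagger (pair (comp g1 (pmor (@pi1 K A B) (idm P))) (comp H2 (pmor pi2 (idm P)))) = pair (dagger g1) (dagger H2).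
Proof.
have HC := cartK HK.
set F : Hom (prod B (prod (prod A B) P)) (prod A B) :=
  pair (comp g1 (pair (comp pi1 (comp pi1 pi2)) (comp pi2 pi2))) (comp H2 (pair pi1 (comp pi2 pi2))).
set G : Hom (prod (prod A B) (prod (prod A B) P)) B := comp pi2 pi1.
have e1 : pair (comp g1 (pmor (@pi1 K A B) (idm P))) (comp H2 (pmor pi2 (idm P)))
   = comp (comp F (pair G pi2)) (pair pi1 (pair pi1 pi2)).
  by rewrite /F /G; simp HC.
rewrite e1 -(ddag HK) (dcomp HK).
have -> : comp G (pair F pi2) = comp H2 (pmor (idm B) pi2).
  by rewrite /G /F; simp HC.
rewrite (dparam HK).
set F2 : Hom (prod A P) (prod A B) := pair g1 (comp (dagger H2) pi2).
have -> : comp F (pair (comp (dagger H2) pi2) (idm (prod (prod A B) P))) = comp F2 (pair (comp pi1 pi1) pi2).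
  by rewrite /F /F2; simp HC; rewrite [in RHS](dfix HK H2); simp HC.
rewrite (dcomp HK).
have -> : comp (comp pi1 pi1) (pair F2 pi2) = g1 by rewrite /F2; simp HC.
by rewrite /F2; simp HC; rewrite -(dfix HK).
Qed.

Lemma ind_lemma (K : catops) (HK : conway K) (A P : Ob K) k (gs : 'I_k.+1 -> Hom (prod A P) A) :
  dagger (tp (fun i => comp (gs i) (pmor (prj i) (idm P)))) = tp (fun i => dagger (gs i)).
Proof.
have HC := cartK HK.
elim: k gs => [|k IH] gs.
  by rewrite /=; simp HC; rewrite (pair_pi HC) (comp1r HC).
rewrite /= -(IH (fun j => gs (lift ord0 j))) -(bin_lemma HK) unlift0.
congr (dagger (pair _ _)).
apply: (tup_ext HC) => i.
rewrite (proj_tup HC) (compA HC) !(proj_tup HC) unliftS; by simp HC.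
Qed.

Lemma LM (K : catops) (HK : conway K) n m1 m2 (act1 : 'I_n.+1 -> 'I_m1.+1 -> 'I_n.+1)
  (act2 : 'I_n.+1 -> 'I_m2.+1 -> 'I_n.+1) :
  Gamma K act2 -> (forall b, exists b2, forall q, act1 q b = act2 q b2) -> Gamma K act1.
Proof.
have HC := cartK HK.
move=> HG Hb; have [phi Hphi] := fin_all_exists Hb.
move=> A C f.
set f2 := comp f (pmor (tp (fun b => prj (phi b))) (idm C)).
have Hd : comp (tp (fun b => prj (phi b))) (diag A m2) = diag A m1.
  apply: (tup_ext HC) => i; by rewrite (compA HC) /diag !(proj_tup HC).
have Hq : fQ act2 f2 = fQ act1 f.
  apply: tup_eq => i; rewrite /f2 (compAr HC); congr (comp f _).
  rewrite /pmor (pair_comp HC) -!(compA HC) !(pi1_pair HC) !(pi2_pair HC) (compA HC) !(comp1l HC).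
  congr (pair (comp _ pi1) _).
  apply: (tup_ext HC) => j; by rewrite (compA HC) /rho !(proj_tup HC) Hphi.
have := HG A C f2; rewrite Hq => ->; congr (comp _ (dagger _)).
by rewrite /f2 (compAr HC) /pmor (pair_comp HC) -!(compA HC) (pi1_pair HC) (pi2_pair HC) (compA HC) Hd !(comp1l HC).
Qed.

Lemma tpE (K : catops) (HK : cartesian K) (A B D : Ob K) k (fs : 'I_k.+1 -> Hom B A) (h : Hom D B) i :
  comp (prj i) (comp (tp fs) h) = comp (fs i) h.
Proof. by rewrite (compA HK) (proj_tup HK). Qed.

Ltac simp2 HK := rewrite /pmor ?(compAr HK, pair_comp HK, pi1_pair HK, pi2_pair HK, comp1l HK, comp1r HK, proj_tup HK, tpE HK).

Definition addc n m (act : 'I_n.+1 -> 'I_m.+1 -> 'I_n.+1) (nw : 'I_n.+1 -> 'I_n.+1) :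
  'I_n.+1 -> 'I_m.+2 -> 'I_n.+1 :=
  fun q i => match unlift ord0 i with Some j => act q j | None => nw q end.

Lemma rho_addc (K : catops) n m (act : 'I_n.+1 -> 'I_m.+1 -> 'I_n.+1) nw (A : Ob K) i :
  rho (addc act nw) A i = pair (prj (nw i)) (rho act A i).
Proof.
rewrite /rho /= /addc unlift0; congr pair; apply: tup_eq => j; by rewrite unliftS.
Qed.

Lemma K2 (K : catops) (HK : conway K) n m (act : 'I_n.+1 -> 'I_m.+1 -> 'I_n.+1) :
  Gamma K act -> Gamma K (addc act id).
Proof.
have HC := cartK HK.
move=> HG A C f.
set g : Hom (prod A (prod (pow1 A m) C)) A := comp f (pair (pair pi1 (comp pi1 pi2)) (comp pi2 pi2)).
set ft := dagger g.
set H : Hom (prod (pow1 A n) (prod (pow1 A n) C)) (pow1 A n) :=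
  tp (fun i => comp (comp g (pmor (idm A) (pmor (rho act A i) (idm C)))) (pmor (prj i) (idm _))).
have e1 : fQ (addc act id) f = comp H (pair pi1 (pair pi1 pi2)).
  apply: (tup_ext HC) => i; rewrite (proj_tup HC) /H (tpE HC) rho_addc /g; by simp2 HC.
have e2 : dagger H = fQ act ft.
  rewrite /H (ind_lemma HK); apply: tup_eq => i; by rewrite (dparam HK).
rewrite e1 -(ddag HK) e2 HG; congr (comp _ _).
rewrite /ft -(dparam HK) (ddag HK); congr dagger.
rewrite /g; simp2 HC. rewrite /diag /=. by simp2 HC.
Qed.

Lemma K1 (K : catops) (HK : conway K) n m (act : 'I_n.+1 -> 'I_m.+1 -> 'I_n.+1) (x y : 'I_m.+1) :
  Gamma K act -> Gamma K (addc act (fun q => act (act q x) y)).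
Proof.
have HC := cartK HK.
move=> HG A C f.
set A2 := prod A A.
set top : Hom (pow1 A2 n) (pow1 A n) := tp (fun i => comp pi1 (prj i)).
set lay : Hom (pow1 A2 n) (pow1 A n) := tp (fun i => comp pi2 (prj i)).
set mk : Hom (prod (pow1 A n) (pow1 A n)) (pow1 A2 n) := tp (fun i => pair (comp (prj i) pi1) (comp (prj i) pi2)).
set topm : Hom (pow1 A2 m) (pow1 A m) := tp (fun j => comp pi1 (prj j)).
set f' : Hom (prod (pow1 A2 m) C) A2 :=
  pair (comp f (pair (pair (comp pi2 (comp (prj x) pi1)) (comp topm pi1)) pi2)) (comp pi1 (comp (prj y) pi1)).
set S : Hom (prod (pow1 A n) C) (pow1 A n) := tp (fun i => comp (prj (act i y)) pi1).
have e1 : comp top mk = pi1.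
  apply: (tup_ext HC) => i; rewrite (tpE HC) /mk (compAr HC) (proj_tup HC); by simp2 HC.
have e2 : comp lay mk = pi2.
  apply: (tup_ext HC) => i; rewrite (tpE HC) /mk (compAr HC) (proj_tup HC); by simp2 HC.
have e3 : comp mk (pair top lay) = idm _.
  apply: (tup_ext HC) => i; rewrite (compA HC) (proj_tup HC) (comp1r HC); simp2 HC.
  by rewrite (pair_eta HC).
have etr : forall i, comp topm (rho act A2 i) = comp (rho act A i) top.
  move=> i; apply: (tup_ext HC) => j.
  by rewrite /topm /rho (compA HC) !(proj_tup HC) (tpE HC) (compAr HC) (proj_tup HC) /top (proj_tup HC).
have hS : comp lay (fQ act f') = comp S (pmor top (idm C)).
  apply: (tup_ext HC) => i; rewrite (tpE HC) /S (tpE HC) /fQ /f'; by simp2 HC.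
have Hs := subst_lemma HK e1 e2 e3 hS.
have eq1 : comp (comp top (fQ act f')) (pair (comp mk (pair pi1 S)) pi2) = fQ (addc act (fun q => act (act q x) y)) f.
  apply: (tup_ext HC) => i.
  rewrite /fQ (proj_tup HC) rho_addc /f'; simp2 HC. by rewrite (rA HC (etr i)) (compAr HC) (rA HC e1) (pi1_pair HC).
set Phid := comp f' (pmor (diag A2 m) (idm C)).
have hSd : comp pi2 Phid = comp (@pi1 K A C) (pmor pi1 (idm C)).
  by rewrite /Phid /f'; simp2 HC.
have e1' : comp (@pi1 K A A) (idm A2) = pi1 by rewrite (comp1r HC).
have e2' : comp (@pi2 K A A) (idm A2) = pi2 by rewrite (comp1r HC).
have e3' : comp (idm A2) (pair pi1 pi2) = idm A2 by rewrite (comp1l HC) (pair_pi HC).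
have Hsd := subst_lemma HK e1' e2' e3' hSd.
have eqd : comp (comp pi1 Phid) (pair (comp (idm A2) (pair pi1 pi1)) pi2) = comp f (pmor (diag A m.+1) (idm C)).
  have etm : comp topm (diag A2 m) = comp (diag A m) pi1.
    apply: (tup_ext HC) => i; by rewrite /topm /diag (tpE HC) (compAr HC) !(proj_tup HC) (tpE HC) (comp1r HC) (comp1l HC).
  have dS : diag A m.+1 = pair (idm A) (diag A m) by [].
  rewrite /Phid /f' dS; simp2 HC. by rewrite (rA HC etm); simp2 HC.
have etd : comp top (diag A2 n) = comp (diag A n) pi1.
  apply: (tup_ext HC) => i; by rewrite /top /diag (tpE HC) (compAr HC) !(proj_tup HC) (tpE HC) (comp1r HC) (comp1l HC).
by rewrite -eq1 -Hs (HG A2 C f') (compA HC) etd -(compA HC) Hsd eqd.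
Qed.

Definition below n m1 m2 (act1 : 'I_n.+1 -> 'I_m1.+1 -> 'I_n.+1) (act2 : 'I_n.+1 -> 'I_m2.+1 -> 'I_n.+1) :=
  forall b, exists b2, forall q, act1 q b = act2 q b2.

Lemma below_trans n m1 m2 m3 (a1 : 'I_n.+1 -> 'I_m1.+1 -> 'I_n.+1) (a2 : 'I_n.+1 -> 'I_m2.+1 -> 'I_n.+1)
  (a3 : 'I_n.+1 -> 'I_m3.+1 -> 'I_n.+1) : below a1 a2 -> below a2 a3 -> below a1 a3.
Proof.
move=> H1 H2 b; have [b2 e2] := H1 b; have [b3 e3] := H2 b2.
by exists b3 => q; rewrite e2 e3.
Qed.

Lemma below_addc n m (act : 'I_n.+1 -> 'I_m.+1 -> 'I_n.+1) nw : below act (addc act nw).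
Proof. by move=> b; exists (lift ord0 b) => q; rewrite /addc unliftS. Qed.

Lemma below_refl n m (act : 'I_n.+1 -> 'I_m.+1 -> 'I_n.+1) : below act act.
Proof. by move=> b; exists b. Qed.

Lemma word_ok (K : catops) (HK : conway K) n m (act : 'I_n.+1 -> 'I_m.+1 -> 'I_n.+1) (u : seq 'I_m.+1) :
  forall m1 (act1 : 'I_n.+1 -> 'I_m1.+1 -> 'I_n.+1), Gamma K act1 -> below act act1 ->
  exists m2 (act2 : 'I_n.+1 -> 'I_m2.+1 -> 'I_n.+1),
    [/\ Gamma K act2, below act1 act2 & exists b, forall q, act2 q b = word_act act q u].
Proof.
elim/last_ind: u => [|u a IH] m1 act1 G1 B1.
  exists m1.+1, (addc act1 id); split; first exact: K2.
    exact: below_addc.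
  by exists ord0 => q; rewrite /addc unlift0.
have [m2 [act2 [G2 B12 [b Hb]]]] := IH m1 act1 G1 B1.
have [a' Ha'] := below_trans B1 B12 a.
exists m2.+1, (addc act2 (fun q => act2 (act2 q b) a')); split.
- exact: K1.
- exact: below_trans B12 (below_addc _ _).
- exists ord0 => q; rewrite /addc unlift0 /word_act foldl_rcons -Ha'.
  by rewrite Hb.
Qed.

Lemma all_ok (K : catops) (HK : conway K) n m (act : 'I_n.+1 -> 'I_m.+1 -> 'I_n.+1) (HG : Gamma K act)
  m' (act' : 'I_n.+1 -> 'I_m'.+1 -> 'I_n.+1)
  (Hw : forall b, exists u, forall q, act' q b = word_act act q u) (s : seq 'I_m'.+1) :
  exists m2 (act2 : 'I_n.+1 -> 'I_m2.+1 -> 'I_n.+1),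
    [/\ Gamma K act2, below act act2 & forall b, b \in s -> exists b2, forall q, act' q b = act2 q b2].
Proof.
elim: s => [|b s [m2 [act2 [G2 B2 H2]]]].
  by exists m, act; split => //; exact: below_refl.
have [u Hu] := Hw b.
have [m3 [act3 [G3 B23 [b3 Hb3]]]] := word_ok HK u G2 B2.
exists m3, act3; split => //.
  exact: below_trans B2 B23.
move=> c; rewrite inE => /orP [/eqP -> | Hc].
  by exists b3 => q; rewrite Hu Hb3.
have [c2 Hc2] := H2 c Hc; have [c3 Hc3] := B23 c2.
by exists c3 => q; rewrite Hc2 Hc3.
Qed.

Unset Implicit Arguments.

Theorem lemma4p1 (K : catops) (HK : conway K)
  (n m : nat) (act : 'I_n.+1 -> 'I_m.+1 -> 'I_n.+1)
  (HG : Gamma K act)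
  (m' : nat) (iota : 'I_m.+1 -> 'I_m'.+1) (act' : 'I_n.+1 -> 'I_m'.+1 -> 'I_n.+1)
  (Hext : extension act iota act') :
  Gamma K act'.
Proof.
case: Hext => _ Hi Hn.
have Hw : forall b, exists u, forall q, act' q b = word_act act q u.
  move=> b; case: (boolP [exists a, iota a == b]).
    by case/existsP => a /eqP <-; exists [:: a] => q; rewrite Hi.
  move=> Hne; apply: Hn => a; apply/negP => Hab; move/negP: Hne; apply.
  by apply/existsP; exists a.
have [m2 [act2 [G2 _ H2]]] := all_ok HK HG Hw (enum 'I_m'.+1).
apply: (LM HK G2) => b; apply: H2; by rewrite mem_enum.
Qed.
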